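(* Let $n \geq 2$ be an integer and $A$ a finite set of size $q \geq 2$. Let $d_1, \dots, d_\ell$ be the divisors $d$ of $n$ with $d\neq 1$ (including $d=n$). Then \[ \mathrm{ICA}(\mathbb{Z}_n; A) \cong (\mathbb{Z}_{d_1} \wr \mathrm{Sym}_{\alpha(d_1,q)}) \times \dots \times (\mathbb{Z}_{d_\ell} \wr \mathrm{Sym}_{\alpha(d_\ell,q)}) \times \mathrm{Sym}_q. \]
   Context: A cellular automaton over $\mathbb{Z}_n$ and $A$ is a map $\tau: A^{\mathbb{Z}_n}\to A^{\mathbb{Z}_n}$ for which there exist a finite $S\subseteq\mathbb{Z}_n$ and $\mu:A^S\to A$ with $(g)(x)\tau = ((R_g\circ x)|_S)\mu$ for all $x$ and $g$, where $R_g\circ x$ is $h\mapsto x(h+g)$ (maps applied on the right); $\mathrm{CA}(\mathbb{Z}_n;A)$ is the semigroup of these under composition and $\mathrm{ICA}(\mathbb{Z}_n;A)$ is its group of units. $\mathrm{Sym}_\alpha$ is the symmetric group on $\{1,\dots,\alpha\}$. $\mathbb{Z}_d\wr\mathrm{Sym}_\alpha = \{(v;\phi): v\in(\mathbb{Z}_d)^\alpha,\ \phi\in\mathrm{Sym}_\alpha\}$ with product $(v;\phi)(w;\psi) = (v + w^\phi;\phi\psi)$, where $\phi$ acts on $w$ by permuting coordinates. $\alpha(d,q) = \frac{1}{d}\sum_{b\mid d}\mu(d/b) q^b$ with $\mu$ the Möbius function (the number of orbits of size $d$ of the cyclic shift on $A^n$). *)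

(* Defs.v *)
From HB Require Import structures.
From mathcomp Require Import all_boot all_order all_algebra all_fingroup.
Set Implicit Arguments. Unset Strict Implicit. Unset Printing Implicit Defensive.
Import GRing.Theory.

Definition config (n : nat) (A : finType) := {ffun 'Z_n -> A}.

Definition shift (n : nat) (A : finType) (g : 'Z_n) (x : config n A) : config n A :=
  [ffun h => x (h + g)%R].

Definition restr (n : nat) (A : finType) (S : {set 'Z_n}) (x : config n A)
  : {ffun {h : 'Z_n | h \in S} -> A} := [ffun s => x (val s)].

Definition is_CA (n : nat) (A : finType) (tau : config n A -> config n A) : Prop :=
  exists (S : {set 'Z_n}) (mu : {ffun {h : 'Z_n | h \in S} -> A} -> A),
    forall (x : config n A) (g : 'Z_n), tau x g = mu (restr S (shift g x)).

(* Such a map is a bijection, so we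
   represent units as permutations of configurations; the mathcomp product
   (s * t) x = t (s x) is composition with maps written on the right. *)
Definition is_ICA (n : nat) (A : finType) (p : {perm config n A}) : Prop :=
  is_CA (fun x => p x) /\ is_CA (fun x => (p^-1)%g x).

Definition mobius (m : nat) : int :=
  if all (fun p => logn p m == 1%N) (primes m) then ((-1) ^+ size (primes m))%R else 0%R.

(* alpha(d,q) = (1/d) sum_{b | d} mu(d/b) q^b  (an exact integer division) *)
Definition alpha (d q : nat) : nat :=
  `| ((\sum_(b <- divisors d) mobius (d %/ b) * (q%:Z) ^+ b)%R %/ d%:Z)%Z |%N.

Definition WR (d a : nat) := ({ffun 'I_a -> 'Z_d} * {perm 'I_a})%type.

(* (v;phi)(w;psi) = (v + w^phi; phi psi), with (w^phi)(i) = w (phi i),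
   phi psi = mathcomp product (first phi then psi). *)
Definition wr_mul (d a : nat) (x y : WR d a) : WR d a :=
  ([ffun i => (x.1 i + y.1 (x.2 i))%R], (x.2 * y.2)%g).

Definition divs (n : nat) : seq nat := [seq d <- divisors n | d != 1%N].

Definition dv (n : nat) (i : 'I_(size (divs n))) : nat := nth 0%N (divs n) i.

Definition WRprod (n q : nat) :=
  ({dffun forall i : 'I_(size (divs n)), WR (dv i) (alpha (dv i) q)} * {perm 'I_q})%type.

Definition rhs_mul (n q : nat) (x y : WRprod n q) : WRprod n q :=
  (@finfun _ (fun i => WR (dv i) (alpha (dv i) q)) (fun i => wr_mul (x.1 i) (y.1 i)),
   (x.2 * y.2)%g).

(* Main.v *)
Require Import Defs.
From mathcomp Require Import all_boot all_order all_algebra all_fingroup.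
Set Implicit Arguments. Unset Strict Implicit. Unset Printing Implicit Defensive.
Import GRing.Theory.

Lemma mob0 p k : prime p -> 0 < k -> p ^ 2 %| k -> mobius k = 0%R.
Proof.
move=> pp k0 pk; rewrite /mobius; case: ifP => // /allP /(_ p).
have pk1 : p %| k by apply: dvdn_trans pk; rewrite dvdn_exp.
rewrite mem_primes pp k0 pk1 => /(_ isT) /eqP.
have := pk; rewrite pfactor_dvdn // => H E; by rewrite E in H.
Qed.

Lemma mobM p e : prime p -> 0 < e -> ~~ (p %| e) -> mobius (p * e) = (- mobius e)%R.
Proof.
move=> pp e0 npe.
have pe0 : 0 < p * e by rewrite muln_gt0 prime_gt0.
have npr : p \notin primes e by rewrite mem_primes (negbTE npe) !andbF.
have H : perm_eq (primes (p * e)) (p :: primes e).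
  apply: uniq_perm; first exact: primes_uniq.
    by rewrite /= npr primes_uniq.
  move=> r; rewrite (primesM _ (prime_gt0 pp) e0) primes_prime // !in_cons in_nil orbF //.
rewrite /mobius (perm_size H) (perm_all _ H) /=.
have cpe : coprime p e by rewrite prime_coprime.
rewrite (lognM _ (prime_gt0 pp) e0) (logn_prime _ pp) eqxx (logn_coprime cpe) /=.
have -> : all (fun r => logn r (p * e) == 1) (primes e) = all (fun r => logn r e == 1) (primes e).
  apply: eq_in_all => r re; rewrite (lognM _ (prime_gt0 pp) e0) (logn_prime _ pp).
  have rp : (r == p) = false by apply/negbTE; apply: contraNneq npr => <-.
  by rewrite rp.
by case: ifP => _; rewrite ?oppr0 // exprS mulN1r.
Qed.

Lemma divisors_pos d b : b \in divisors d -> 0 < b.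
Proof.
case: d => [|d]; first by rewrite inE => /eqP ->.
by rewrite -dvdn_divisors // => /dvdn_gt0; apply.
Qed.

Lemma FM (F : nat -> int) d c : 0 < d -> c %| d ->
  (\sum_(b <- divisors d | (c %| b)%N) F b = \sum_(b <- divisors (d %/ c)) F (c * b)%N)%R.
Proof.
move=> d0 cd; have c0 : 0 < c by apply: dvdn_gt0 cd.
have dc0 : 0 < d %/ c by rewrite divn_gt0 // dvdn_leq.
rewrite -big_filter -(big_map (muln c) xpredT); apply: perm_big.
apply: uniq_perm; first by rewrite filter_uniq // divisors_uniq.
  rewrite map_inj_uniq ?divisors_uniq //.
  by move=> x y /eqP; rewrite eqn_pmul2l // => /eqP.
move=> x; rewrite mem_filter -dvdn_divisors //; apply/idP/mapP.
  case/andP=> cx xd; exists (x %/ c); first by rewrite -dvdn_divisors // dvdn_divRL // divnK.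
  by rewrite mulnC divnK.
case=> b; rewrite -dvdn_divisors // => bd ->; apply/andP; split; first exact: dvdn_mulr.
by rewrite mulnC -dvdn_divRL.
Qed.

Lemma mob1 : mobius 1 = 1%R. Proof. by []. Qed.

Lemma Ssum m : 0 < m -> (\sum_(e <- divisors m) mobius e = if (m == 1)%N then 1 else 0)%R.
Proof.
move=> m0; case: (ltngtP m 1) => [|m1|->]; first by rewrite ltnNge m0.
  have pp := pdiv_prime m1; have pm := pdiv_dvd m; move: (pdiv m) pp pm => p pp pm.
  have mp0 : 0 < m %/ p by rewrite divn_gt0 ?prime_gt0 // dvdn_leq.
  rewrite (bigID (dvdn p)) /= FM // (bigID (dvdn p)) /=.
  rewrite big1_seq ?add0r; last first.
    move=> b /andP[pb bd]; apply: (mob0 pp); first by rewrite muln_gt0 prime_gt0 // (divisors_pos bd).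
    by rewrite expnS dvdn_pmul2l ?prime_gt0.
  rewrite big_seq_cond (eq_bigr (fun b => - mobius b)%R); last first.
    move=> b /andP[bd pb]; apply: mobM => //; exact: divisors_pos bd.
  rewrite sumrN -big_seq_cond.
  apply/eqP; rewrite addrC subr_eq0; apply/eqP.
  rewrite -[LHS]big_filter -[RHS]big_filter; apply: perm_big.
  apply: uniq_perm; rewrite ?filter_uniq ?divisors_uniq //.
  move=> b; rewrite !mem_filter -!dvdn_divisors //=.
  case pb: (p %| b) => //=.
  have cbp : coprime b p by rewrite coprime_sym prime_coprime // pb.
  by rewrite dvdn_divRL // Gauss_dvd // pm andbT.
by have -> : divisors 1 = [:: 1] by []; rewrite big_seq1.
Qed.

Lemma S2 k : 0 < k -> (\sum_(b <- divisors k) mobius (k %/ b) = if (k == 1)%N then 1 else 0)%R.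
Proof.
move=> k0; rewrite -(Ssum k0) -(big_map (fun b => k %/ b) xpredT mobius).
apply: perm_big; apply: uniq_perm; last 1 first.
- move=> x; apply/mapP/idP.
    by case=> b; rewrite -!dvdn_divisors // => bk ->; apply: dvdn_div.
  rewrite -dvdn_divisors // => xk; exists (k %/ x); first by rewrite -dvdn_divisors // dvdn_div.
  by rewrite divnA // mulKn // (dvdn_gt0 k0 xk).
- rewrite map_inj_in_uniq ?divisors_uniq // => x y; rewrite -!dvdn_divisors // => xk yk E.
  have hx : x = k %/ (k %/ x) by rewrite divnA // mulKn.
  have hy : y = k %/ (k %/ y) by rewrite divnA // mulKn.
  by rewrite hx hy E.
- exact: divisors_uniq.
Qed.

Lemma inversion (g G : nat -> int) d : 0 < d ->
  (forall b, (b %| d)%N -> (G b = \sum_(c <- divisors b) g c)%R) ->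
  (\sum_(b <- divisors d) mobius (d %/ b) * G b = g d)%R.
Proof.
move=> d0 HG.
rewrite (eq_big_seq (fun b => \sum_(c <- divisors d | (c %| b)%N) mobius (d %/ b) * g c)%R); last first.
  move=> b; rewrite -dvdn_divisors // => bd; rewrite HG // mulr_sumr -[RHS]big_filter.
  have b0 : 0 < b by apply: dvdn_gt0 bd.
  apply: perm_big; apply: uniq_perm; rewrite ?filter_uniq ?divisors_uniq //.
  move=> c; rewrite mem_filter -!dvdn_divisors //=.
  case cb: (c %| b) => //=; by rewrite (dvdn_trans cb bd).
rewrite (exchange_big_dep xpredT) //=.
rewrite (eq_big_seq (fun c => (if (d %/ c == 1)%N then 1 else 0) * g c)%R); last first.
  move=> c; rewrite -dvdn_divisors // => cd; rewrite -mulr_suml FM //.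
  have c0 : 0 < c by apply: dvdn_gt0 cd.
  have dc0 : 0 < d %/ c by rewrite divn_gt0 // dvdn_leq.
  rewrite -(S2 dc0); congr (_ * _)%R; apply: eq_bigr => b _.
  by rewrite divnMA.
rewrite (big_rem d) ?divisors_id // divnn d0 eqxx mul1r big1_seq ; first exact: addr0.
move=> c /andP[_]; rewrite (mem_rem_uniq _ (divisors_uniq d)) inE => /andP[cnd]; rewrite -dvdn_divisors // => cd.
case: eqP => [E|]; last by rewrite mul0r.
by move: cnd; rewrite -{1}(divnK cd) E mul1n eqxx.
Qed.

Definition mkperm k (g : 'I_k -> 'I_k) : {perm 'I_k} :=
  match injectiveP g with ReflectT H => perm H | ReflectF _ => 1%g end.

Lemma mkpermE k (g : 'I_k -> 'I_k) : injective g -> mkperm g =1 g.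
Proof. by rewrite /mkperm; case: injectiveP => // H _ x; rewrite permE. Qed.

Lemma cast_permM k l (e : k = l) (s t : {perm 'I_k}) :
  cast_perm e (s * t)%g = (cast_perm e s * cast_perm e t)%g.
Proof. by apply/permP => i; rewrite permM !cast_permE permM cast_ordK. Qed.

Section Comb.
Variable m : nat.
Local Notation n := m.+2.
Variable A : finType.
Local Notation X := (config n A).

Lemma n_gt1 : 1 < n. Proof. by []. Qed.

Lemma shift_add (g h : 'Z_n) (x : X) : shift g (shift h x) = shift (g + h)%R x.
Proof. by apply/ffunP => k; rewrite !ffunE addrA. Qed.

Lemma shift0 (x : X) : shift 0%R x = x.
Proof. by apply/ffunP => k; rewrite !ffunE addr0. Qed.

Lemma shiftK (g : 'Z_n) : cancel (@shift n A g) (@shift n A (- g)%R).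
Proof. by move=> x; rewrite shift_add addNr shift0. Qed.

Lemma shift_inj (g : 'Z_n) : injective (@shift n A g).
Proof. exact: can_inj (shiftK g). Qed.

Definition sh (k : nat) (x : X) : X := shift (k%:R : 'Z_n)%R x.

Lemma sh_add a b x : sh a (sh b x) = sh (a + b) x.
Proof. by rewrite /sh shift_add natrD. Qed.

Lemma sh0 x : sh 0 x = x.
Proof. exact: shift0. Qed.

Lemma shn x : sh n x = x.
Proof. by rewrite /sh pchar_Zp // shift0. Qed.

Lemma sh_inj k : injective (sh k).
Proof. exact: shift_inj. Qed.

Lemma shiftE (g : 'Z_n) x : shift g x = sh g x.
Proof. by rewrite /sh natr_Zp. Qed.

Lemma shC a b x : sh a (sh b x) = sh b (sh a x).
Proof. by rewrite !sh_add addnC. Qed.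

Lemma sh_mul a j x : sh a x = x -> sh (a * j) x = x.
Proof.
move=> ax; elim: j => [|j IH]; first by rewrite muln0 sh0.
by rewrite mulnS -sh_add IH ax.
Qed.

Lemma ex_per (x : X) : exists k, (0 < k) && (sh k x == x).
Proof. by exists n; rewrite shn eqxx. Qed.

Definition per (x : X) := ex_minn (ex_per x).

Lemma perP x : [/\ 0 < per x, sh (per x) x = x &
  forall k, 0 < k -> sh k x = x -> per x <= k].
Proof.
rewrite /per; case: ex_minnP => k /andP[k0 /eqP kx] kmin; split => // j j0 jx.
by apply: kmin; rewrite j0 jx eqxx.
Qed.

Lemma per_gt0 x : 0 < per x. Proof. by case: (perP x). Qed.

Lemma sh_modper k x : sh k x = sh (k %% per x) x.
Proof.
case: (perP x) => _ px _.
by rewrite {1}(divn_eq k (per x)) addnC -sh_add mulnC sh_mul.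
Qed.

Lemma fix_dvd k x : (sh k x = x) <-> (per x %| k).
Proof.
split => [kx|]; last by rewrite /dvdn sh_modper => /eqP ->; rewrite sh0.
case: (perP x) => p0 _ pmin.
case: (posnP (k %% per x)) => [H0|H]; first by rewrite /dvdn H0.
have := pmin _ H; rewrite -sh_modper => /(_ kx).
by rewrite leqNgt ltn_pmod.
Qed.

Lemma per_dvd_n x : per x %| n.
Proof. by apply/fix_dvd; exact: shn. Qed.

Lemma per_eq x y : (forall j, sh j x = x <-> sh j y = y) -> per x = per y.
Proof.
move=> H; apply/eqP; rewrite eqn_dvd; apply/andP; split.
  by apply/fix_dvd/H; case: (perP y).
by apply/fix_dvd/H; case: (perP x).
Qed.

Lemma per_sh k x : per (sh k x) = per x.
Proof.
apply: per_eq => j; rewrite shC; split => [|->//]; exact: sh_inj.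
Qed.

Lemma sh_eq_mod a b x : (sh a x = sh b x) <-> (a = b %[mod per x]).
Proof.
split; last by move=> E; rewrite sh_modper E -sh_modper.
wlog ab : a b / a <= b.
  move=> W; case: (leqP a b) => [/W//|/ltnW ba E]; by rewrite (W b a).
move=> E; apply/eqP; rewrite eq_sym eqn_mod_dvd //.
rewrite -(per_sh a); apply/fix_dvd.
by rewrite sh_add subnK // E.
Qed.

(* canonical representative *)
Definition o (x : X) : 'I_n :=
  fintype.arg_min (ord0 : 'I_n) xpredT (fun k : 'I_n => (enum_rank (sh k x) : nat)).
Definition c (x : X) := sh (o x) x.

Lemma c_min x (k : 'I_n) : (enum_rank (c x) : nat) <= enum_rank (sh k x).
Proof.
rewrite /c /o; case: fintype.arg_minnP => // i _ H; exact: H.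
Qed.

Lemma sh_any x j : exists k : 'I_n, sh k x = sh j x.
Proof.
exists (Ordinal (ltn_pmod j (isT : 0 < n))) => /=.
by rewrite [RHS]/sh -Zp_nat_mod.
Qed.

Lemma sh_modn k x : sh k x = sh (k %% n) x.
Proof. by rewrite /sh Zp_nat_mod. Qed.

Lemma sh_back j x : sh (n - j %% n) (sh j x) = x.
Proof.
rewrite sh_add sh_modn -modnDmr subnK ?modnn ?sh0 //.
by apply: ltnW; rewrite ltn_pmod.
Qed.

Lemma c_sh j x : c (sh j x) = c x.
Proof.
apply: enum_rank_inj; apply: val_inj; apply/eqP; rewrite eqn_leq; apply/andP; split.
  have [k Hk] := sh_any (sh j x) (o x + (n - j %% n)).
  by apply: leq_trans (c_min _ k) _; rewrite Hk -sh_add sh_back.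
have [k Hk] := sh_any x (o (sh j x) + j).
by apply: leq_trans (c_min _ k) _; rewrite Hk -sh_add.
Qed.

Lemma c_c x : c (c x) = c x.
Proof. exact: c_sh. Qed.

Lemma per_c x : per (c x) = per x.
Proof. exact: per_sh. Qed.

Definition off (x : X) : nat := (n - o x) %% per x.

Lemma off_lt x : off x < per x.
Proof. by rewrite ltn_pmod // per_gt0. Qed.

Lemma off_spec x : sh (off x) (c x) = x.
Proof.
rewrite /off /c; have E := sh_modper (n - o x) (sh (o x) x); rewrite per_sh in E.
rewrite -E sh_add subnK ?shn //; exact: ltnW (ltn_ord _).
Qed.

Lemma c_orbit x y : (c x = c y) <-> (exists k, y = sh k x).
Proof.
split => [E|[k ->]]; last by rewrite c_sh.
exists (off y + o x); rewrite -sh_add.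
by rewrite -[sh (o x) x]/(c x) E off_spec.
Qed.

Definition comm (p : {perm X}) := forall (g : 'Z_n) x, p (shift g x) = shift g (p x).

Lemma CA_comm (tau : X -> X) : is_CA tau -> forall (g : 'Z_n) x, tau (shift g x) = shift g (tau x).
Proof.
case=> S [mu H] g x; apply/ffunP => h.
by rewrite H shift_add [RHS]ffunE H.
Qed.

Lemma comm_CA (tau : X -> X) : (forall (g : 'Z_n) x, tau (shift g x) = shift g (tau x)) -> is_CA tau.
Proof.
move=> H; exists [set: 'Z_n].
exists (fun r => tau [ffun h => r (exist _ h (in_setT h))] 0%R) => x g.
have -> : [ffun h => restr [set: 'Z_n] (shift g x) (exist _ h (in_setT h))] = shift g x.
  by apply/ffunP => h; rewrite !ffunE.
by rewrite H ffunE add0r.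
Qed.

Lemma comm_inv p : comm p -> comm p^-1.
Proof.
move=> H g x; apply: (@perm_inj _ p); by rewrite H !permKV.
Qed.

Lemma ICA_comm p : is_ICA p <-> comm p.
Proof.
split => [[H _]|H]; first exact: CA_comm.
split; apply: comm_CA; [exact: H | exact: comm_inv].
Qed.

Lemma comm_mul s t : comm s -> comm t -> comm (s * t).
Proof. by move=> Hs Ht g x; rewrite !permM Hs Ht. Qed.

Lemma comm_sh p k x : comm p -> p (sh k x) = sh k (p x).
Proof. by move=> H; rewrite /sh H. Qed.

Lemma per_p p x : comm p -> per (p x) = per x.
Proof.
move=> H; apply: per_eq => j; rewrite -comm_sh //; split => [/perm_inj//|->//].
Qed.

Lemma c_p_inj p x y : comm p -> c (p x) = c (p y) -> c x = c y.
Proof.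
move=> H /c_orbit [k E]; apply/c_orbit; exists k.
by apply: (@perm_inj _ p); rewrite comm_sh.
Qed.

Lemma c_p p x : comm p -> c (p (c x)) = c (p x).
Proof.
by move=> H; rewrite -{2}(off_spec x) comm_sh // c_sh.
Qed.

Definition R d := [set x : X | (c x == x) && (per x == d)].
Definition P d := [set x : X | per x == d].

Lemma cR x : c x \in R (per x).
Proof. by rewrite inE c_c per_c !eqxx. Qed.

Lemma card_P d : 0 < d -> #|P d| = #|R d| * d.
Proof.
move=> d0.
rewrite -sum1_card (partition_big c (fun r => r \in R d)); last first.
  by move=> x; rewrite inE => /eqP <-; exact: cR.
rewrite -sum_nat_const; apply: eq_bigr => r; rewrite inE => /andP[/eqP cr /eqP pr].
have -> : \sum_(x in P d | c x == r) 1 = #|[set x in P d | c x == r]|.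
  by rewrite -sum1_card; apply: eq_bigl => x; rewrite inE.
have -> : [set x in P d | c x == r] = [set sh (val k) r | k : 'I_d].
  apply/setP => x; rewrite inE; apply/idP/imsetP.
    rewrite inE => /andP[/eqP px /eqP cx].
    have ol : off x < d by rewrite -px off_lt.
    by exists (Ordinal ol) => //=; rewrite -cx off_spec.
  by case=> k _ ->; rewrite !inE per_sh c_sh cr pr !eqxx.
rewrite card_imset ?card_ord // => k k' /sh_eq_mod; rewrite pr => E.
apply: ord_inj; rewrite -(modn_small (ltn_ord k)) -(modn_small (ltn_ord k')). exact: E.
Qed.

Definition Fix d := [set x : X | sh d x == x].

Lemma sum_P d : 0 < d -> \sum_(b <- divisors d) #|P b| = #|Fix d|.
Proof.
move=> d0.
have E1 b : #|P b| = \sum_x (per x == b : nat).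
  by rewrite -sum1_card big_mkcond /=; apply: eq_bigr => x _; rewrite inE; case: (_ == _).
rewrite (eq_bigr _ (fun b _ => E1 b)) exchange_big /=.
rewrite -sum1_card [RHS]big_mkcond /=; apply: eq_bigr => x _.
have -> : \sum_(b <- divisors d) (per x == b : nat) = \sum_(b <- divisors d | per x == b) 1.
  by rewrite [RHS]big_mkcond /=; apply: eq_bigr => b _; case: (_ == _).
rewrite sum1_count (eq_count (a2 := pred1 (per x))); last by move=> b; rewrite /= eq_sym.
rewrite count_uniq_mem ?divisors_uniq // -dvdn_divisors // inE.
have -> : (per x %| d) = (sh d x == x) by apply/idP/eqP => /fix_dvd.
by case: (_ == _).
Qed.

Section Ext.
Variables (d : nat) (d0 : 0 < d) (dn : d %| n).

Definition ext (u : {ffun 'I_d -> A}) : X :=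
  [ffun h : 'Z_n => u (Ordinal (ltn_pmod (nat_of_ord h) d0))].

Lemma ext_fix u : sh d (ext u) = ext u.
Proof.
apply/ffunP => h; rewrite /sh !ffunE; congr (u _); apply: ord_inj => /=.
rewrite val_Zp_nat // modn_dvdm // -modnDmr modn_dvdm // modnDmr.
by rewrite modnDr.
Qed.

Lemma ext_inj : injective ext.
Proof.
move=> u u' E; apply/ffunP => i; have := congr1 (fun x : X => x (i%:R : 'Z_n)%R) E; rewrite !ffunE.
have Hi : Ordinal (ltn_pmod (nat_of_ord (i%:R : 'Z_n)%R) d0) = i.
  have iln : i < n := leq_trans (ltn_ord i) (dvdn_leq (isT : 0 < n) dn).
  by apply: ord_inj; rewrite /= val_Zp_nat // !modn_small.
by rewrite Hi.
Qed.

Lemma Fix_ext x : sh d x = x -> x = ext [ffun i : 'I_d => x (i%:R)%R].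
Proof.
move=> Hx; apply/ffunP => h; rewrite !ffunE /=.
have Hx' : sh (d * (h %/ d)) x = x by apply: sh_mul.
symmetry; transitivity (sh (d * (h %/ d)) x ((h %% d)%:R)%R); first by rewrite Hx'.
by rewrite /sh ffunE -natrD addnC mulnC -divn_eq natr_Zp.
Qed.

Lemma card_Fix : #|Fix d| = #|A| ^ d.
Proof.
have -> : Fix d = [set ext u | u in [set: {ffun 'I_d -> A}]].
  apply/setP => x; rewrite inE; apply/eqP/imsetP.
    by move=> Hx; exists [ffun i : 'I_d => x (i%:R)%R]; rewrite ?inE // -Fix_ext.
  by case=> u _ ->; exact: ext_fix.
by rewrite card_imset ?cardsT ?card_ffun ?card_ord //; exact: ext_inj.
Qed.

End Ext.

Lemma alpha_R d : d %| n -> alpha d #|A| = #|R d|.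
Proof.
move=> dn; have d0 : 0 < d by apply: dvdn_gt0 dn.
have key : (\sum_(b <- divisors d) mobius (d %/ b) * (Posz #|A|) ^+ b)%R = Posz (#|R d| * d).
  apply: (inversion (g := fun b => Posz (#|R b| * b))) => // b bd.
  have bn : b %| n := dvdn_trans bd dn.
  have b0 : 0 < b by apply: dvdn_gt0 bd.
  rewrite -natz -natrX natz -(card_Fix b0 bn) -sum_P // -natz natr_sum.
  apply: eq_big_seq => c0 c0b; rewrite natz card_P //; exact: divisors_pos c0b.
rewrite /alpha key PoszM mulzK //.
by rewrite -lt0n.
Qed.


Section Main.
Variable x0 : X.
Local Notation q := #|A|.

Definition er d := enum (R d).
Definition rep d (j : nat) := nth x0 (er d) j.
Definition idx d x := index (c x) (er d).

Lemma size_er d : size (er d) = #|R d|.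
Proof. by rewrite cardE. Qed.

Lemma rep_in d j : d %| n -> j < alpha d q -> rep d j \in R d.
Proof.
move=> dn; rewrite alpha_R // => jl.
by rewrite -mem_enum mem_nth // size_er.
Qed.

Lemma rep_c d j : d %| n -> j < alpha d q -> c (rep d j) = rep d j.
Proof. by move=> dn jl; have := rep_in dn jl; rewrite inE => /andP[/eqP]. Qed.

Lemma rep_per d j : d %| n -> j < alpha d q -> per (rep d j) = d.
Proof. by move=> dn jl; have := rep_in dn jl; rewrite inE => /andP[_ /eqP]. Qed.

Lemma idx_lt x : idx (per x) x < alpha (per x) q.
Proof. by rewrite alpha_R ?per_dvd_n // -size_er index_mem mem_enum cR. Qed.

Lemma rep_idx x : rep (per x) (idx (per x) x) = c x.
Proof. by rewrite /rep /idx nth_index // mem_enum cR. Qed.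

Lemma idx_rep d j : d %| n -> j < alpha d q -> idx d (rep d j) = j.
Proof.
move=> dn jl; rewrite /idx rep_c // /rep index_uniq ?enum_uniq //.
by rewrite size_er -alpha_R.
Qed.

Lemma idx_sh d k x : idx d (sh k x) = idx d x.
Proof. by rewrite /idx c_sh. Qed.

Lemma off_c x : c x = x -> off x = 0.
Proof.
move=> cx; rewrite /off; apply/eqP; rewrite -/(dvdn _ _) dvdn_sub ?per_dvd_n //.
by apply/fix_dvd; rewrite -/(c x).
Qed.

Lemma off_sh k x : off (sh k x) = k + off x %[mod per x].
Proof.
rewrite -per_c; apply/sh_eq_mod; rewrite -sh_add off_spec -{1}(c_sh k x) off_spec //.
Qed.

Definition Phi (p : {perm X}) d : {perm 'I_(alpha d q)} :=
  mkperm (fun j : 'I_(alpha d q) => insubd j (idx d (p (rep d j)))).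
Definition V (p : {perm X}) d : {ffun 'I_(alpha d q) -> 'Z_d} :=
  [ffun j : 'I_(alpha d q) => ((off (p (rep d j)))%:R)%R].

Lemma per_prep p d (j : 'I_(alpha d q)) : comm p -> d %| n -> per (p (rep d j)) = d.
Proof. by move=> H dn; rewrite per_p // rep_per. Qed.

Lemma idx_prep_lt p d (j : 'I_(alpha d q)) : comm p -> d %| n -> idx d (p (rep d j)) < alpha d q.
Proof. by move=> H dn; have := idx_lt (p (rep d j)); rewrite per_prep. Qed.

Lemma PhiE p d (j : 'I_(alpha d q)) : comm p -> d %| n -> val (Phi p d j) = idx d (p (rep d j)).
Proof.
move=> H dn; rewrite /Phi mkpermE ?val_insubd ?idx_prep_lt //.
move=> j1 j2 /(congr1 val); rewrite !val_insubd !idx_prep_lt // => E.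
have E' : c (p (rep d j1)) = c (p (rep d j2)).
  by rewrite -(rep_idx (p (rep d j1))) -(rep_idx (p (rep d j2))) !per_prep // E.
have := c_p_inj H E'; rewrite !rep_c // => /(congr1 (idx d)); rewrite !idx_rep //.
by move/ord_inj.
Qed.

Lemma c_prep p d (j : 'I_(alpha d q)) : comm p -> d %| n -> c (p (rep d j)) = rep d (Phi p d j).
Proof.
by move=> H dn; rewrite PhiE // -(rep_idx (p (rep d j))) per_prep.
Qed.

Lemma prep p d (j : 'I_(alpha d q)) : comm p -> d %| n ->
  p (rep d j) = sh (off (p (rep d j))) (rep d (Phi p d j)).
Proof. by move=> H dn; rewrite -c_prep // off_spec. Qed.

Lemma Phi_mul s t d : comm s -> comm t -> d %| n -> Phi (s * t) d = (Phi s d * Phi t d)%g.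
Proof.
move=> Hs Ht dn; apply/permP => j; apply: ord_inj.
rewrite permM (PhiE _ (comm_mul Hs Ht) dn) (PhiE _ Ht dn).
by rewrite permM (prep j Hs dn) comm_sh // idx_sh.
Qed.

Lemma modZ d a b : 1 < d -> a = b %[mod d] -> ((a%:R : 'Z_d) = b%:R)%R.
Proof. by move=> d1 E; rewrite -Zp_nat_mod // E Zp_nat_mod. Qed.

Lemma V_mul s t d : comm s -> comm t -> d %| n -> 1 < d ->
  V (s * t) d = [ffun j => V s d j + V t d (Phi s d j)]%R.
Proof.
move=> Hs Ht dn d1; apply/ffunP => j; rewrite !ffunE -natrD; apply: modZ => //.
rewrite permM {1}(prep j Hs dn) comm_sh // {1}(prep (Phi s d j) Ht dn) sh_add.
set r := rep d (Phi t d (Phi s d j)).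
have rc : c r = r by rewrite /r rep_c.
have rpd : per r = d by rewrite /r rep_per.
by have := off_sh (off (s (rep d j)) + off (t (rep d (Phi s d j)))) r; rewrite rpd (off_c rc) addn0.
Qed.

Lemma sh_per1 k y : per y = 1 -> sh k y = y.
Proof. by move=> py; apply/fix_dvd; rewrite py dvd1n. Qed.

Lemma agree_rep s t d : comm s -> comm t -> d %| n -> Phi s d = Phi t d ->
  (d = 1 \/ V s d = V t d) -> forall j : 'I_(alpha d q), s (rep d j) = t (rep d j).
Proof.
move=> Hs Ht dn E dV j; rewrite (prep j Hs dn) (prep j Ht dn) E.
have rp : per (rep d (Phi t d j)) = d by rewrite rep_per.
case: (eqVneq d 1) => [d1|dn1]; first by rewrite !sh_per1 // rp.
have d1 : 1 < d by rewrite ltn_neqAle eq_sym dn1 (dvdn_gt0 _ dn).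
case: dV => [/eqP|VE]; first by rewrite (negbTE dn1).
apply/sh_eq_mod; rewrite rp.
have := congr1 (fun f : {ffun 'I_(alpha d q) -> 'Z_d} => nat_of_ord (f j)) VE; rewrite /= !ffunE !val_Zp_nat //.
Qed.

Lemma agree_all s t : comm s -> comm t ->
  (forall d, d %| n -> forall j : 'I_(alpha d q), s (rep d j) = t (rep d j)) -> s = t.
Proof.
move=> Hs Ht H; apply/permP => x.
have E := H _ (per_dvd_n x) (Ordinal (idx_lt x)); rewrite /= rep_idx in E.
by rewrite -[in LHS](off_spec x) -[in RHS](off_spec x) (comm_sh (off x) (c x) Hs) (comm_sh (off x) (c x) Ht) E.
Qed.

Lemma dv_in (i : 'I_(size (divs n))) : dv i \in divs n.
Proof. exact: mem_nth. Qed.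

Lemma dv_dvd (i : 'I_(size (divs n))) : dv i %| n.
Proof. by have := dv_in i; rewrite mem_filter -dvdn_divisors // => /andP[]. Qed.

Lemma dv_gt1 (i : 'I_(size (divs n))) : 1 < dv i.
Proof.
have := dv_in i; rewrite mem_filter -dvdn_divisors // => /andP[d1 dn].
by rewrite ltn_neqAle eq_sym d1 (dvdn_gt0 _ dn).
Qed.

Lemma dv_inj : injective (@dv n).
Proof.
move=> i1 i2 E; apply: ord_inj; apply/eqP.
rewrite -(nth_uniq 0 (ltn_ord i1) (ltn_ord i2)) ?filter_uniq ?divisors_uniq //.
by apply/eqP.
Qed.

Lemma pick_dv (i : 'I_(size (divs n))) : [pick i' | dv i' == dv i] = Some i.
Proof.
case: pickP => [i' /eqP/dv_inj -> //|/(_ i)]; by rewrite eqxx.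
Qed.

Lemma pick_dv1 : [pick i' : 'I_(size (divs n)) | dv i' == 1] = None.
Proof.
case: pickP => // i /eqP E; have := dv_gt1 i; by rewrite E.
Qed.

Lemma dv_exists d : d %| n -> d != 1 -> exists i : 'I_(size (divs n)), dv i = d.
Proof.
move=> dn d1; have dd : d \in divs n by rewrite mem_filter d1 -dvdn_divisors.
have il : index d (divs n) < size (divs n) by rewrite index_mem.
by exists (Ordinal il); rewrite /dv nth_index.
Qed.

Lemma alpha1 : alpha 1 q = q.
Proof.
rewrite /alpha; have -> : divisors 1 = [:: 1] by [].
rewrite big_seq1.
have -> : mobius (1 %/ 1) = 1%R by [].
by rewrite mul1r expr1 divz1.
Qed.

Definition app k (F : 'I_k -> nat) (j : nat) : nat :=
  if @insub nat (fun i => i < k) _ j is Some j' then F j' else 0.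

Lemma appE k F (j : 'I_k) : app F j = F j.
Proof. by rewrite /app valK. Qed.

Section Surj.
Variable y : WRprod n q.

Definition PhiN d (j : nat) : nat :=
  if d == 1 then app (fun j' : 'I_(alpha 1 q) => nat_of_ord (y.2 (cast_ord alpha1 j'))) j
  else if [pick i | dv i == d] is Some i then
    app (fun j' : 'I_(alpha (dv i) q) => nat_of_ord ((y.1 i).2 j')) j
  else 0.

Definition VN d (j : nat) : nat :=
  if [pick i | dv i == d] is Some i then
    app (fun j' : 'I_(alpha (dv i) q) => nat_of_ord ((y.1 i).1 j')) j
  else 0.

Lemma PhiN_perm d : d %| n -> exists sg : {perm 'I_(alpha d q)},
  forall j : 'I_(alpha d q), PhiN d j = sg j.
Proof.
move=> dn; case: (eqVneq d 1) => [d1|d1].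
  subst d; exists (cast_perm (esym alpha1) y.2) => j.
  rewrite /PhiN eqxx appE cast_permE /=; congr (nat_of_ord (y.2 _)); exact: ord_inj.
have [i Hi] := dv_exists dn d1; subst d.
by exists (y.1 i).2 => j; rewrite /PhiN (negbTE d1) pick_dv appE.
Qed.

Lemma PhiN_lt d j : d %| n -> j < alpha d q -> PhiN d j < alpha d q.
Proof.
move=> dn jl; have [sg Hs] := PhiN_perm dn.
by rewrite -[j]/(nat_of_ord (Ordinal jl)) Hs.
Qed.

Lemma PhiN_inj d j1 j2 : d %| n -> j1 < alpha d q -> j2 < alpha d q ->
  PhiN d j1 = PhiN d j2 -> j1 = j2.
Proof.
move=> dn jl1 jl2; have [sg Hs] := PhiN_perm dn.
rewrite -[j1]/(nat_of_ord (Ordinal jl1)) -[j2]/(nat_of_ord (Ordinal jl2)) !Hs.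
by move/ord_inj/perm_inj => ->.
Qed.

Definition py (x : X) : X :=
  sh (off x + VN (per x) (idx (per x) x)) (rep (per x) (PhiN (per x) (idx (per x) x))).

Lemma PhiN_idx_lt x : PhiN (per x) (idx (per x) x) < alpha (per x) q.
Proof. exact: PhiN_lt (per_dvd_n x) (idx_lt x). Qed.

Lemma py_per x : per (py x) = per x.
Proof. by rewrite /py per_sh rep_per ?per_dvd_n ?PhiN_idx_lt. Qed.

Lemma py_c x : c (py x) = rep (per x) (PhiN (per x) (idx (per x) x)).
Proof. by rewrite /py c_sh rep_c ?per_dvd_n ?PhiN_idx_lt. Qed.

Lemma py_inj : injective py.
Proof.
move=> x1 x2 E.
have pe : per x2 = per x1 by rewrite -py_per -E py_per.
have ce : c (py x1) = c (py x2) by rewrite E.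
rewrite !py_c pe in ce.
set d := per x1 in pe ce.
have dn : d %| n by exact: per_dvd_n.
have l1 : idx d x1 < alpha d q by exact: idx_lt.
have l2 : idx d x2 < alpha d q by rewrite -pe idx_lt.
have := congr1 (idx d) ce; rewrite !idx_rep ?PhiN_lt // => /PhiN_inj => /(_ dn l1 l2) ie.
have cx : c x1 = c x2 by rewrite -rep_idx -/d ie -pe rep_idx.
move: E; rewrite /py pe -/d ie => /sh_eq_mod.
rewrite rep_per ?PhiN_lt // => /eqP.
rewrite eqn_modDr => /eqP.
have o1 : off x1 < d by exact: off_lt.
have o2 : off x2 < d by rewrite -pe off_lt.
rewrite !modn_small // => oe.
by rewrite -(off_spec x1) -(off_spec x2) oe cx.
Qed.

Lemma py_comm (g : 'Z_n) x : py (shift g x) = shift g (py x).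
Proof.
rewrite !shiftE /py per_sh !idx_sh sh_add.
apply/sh_eq_mod; rewrite rep_per ?per_dvd_n ?PhiN_idx_lt //.
rewrite -modnDml off_sh modnDml addnA //.
Qed.

End Surj.

Definition Fm (p : {perm X}) : WRprod n q :=
  (@finfun _ (fun i => WR (dv i) (alpha (dv i) q)) (fun i => (V p (dv i), Phi p (dv i))),
   cast_perm alpha1 (Phi p 1)).

Lemma Fm_mul s t : comm s -> comm t -> Fm (s * t)%g = rhs_mul (Fm s) (Fm t).
Proof.
move=> Hs Ht; rewrite /Fm /rhs_mul /=; congr pair.
  apply/ffunP => i; rewrite !ffunE /wr_mul /=.
  by rewrite V_mul ?dv_dvd ?dv_gt1 // Phi_mul ?dv_dvd.
by rewrite Phi_mul ?dvd1n // cast_permM.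
Qed.

Lemma Fm_inj s t : comm s -> comm t -> Fm s = Fm t -> s = t.
Proof.
move=> Hs Ht E; apply: agree_all => // d dn.
case: (eqVneq d 1) => [d1|d1].
  subst d; apply: agree_rep => //; last by left.
  have := congr1 (fun y : WRprod n q => cast_perm (esym alpha1) y.2) E.
  by rewrite /= !cast_perm_comp !cast_perm_id.
have [i Hi] := dv_exists dn d1; subst d.
have := congr1 (fun y : WRprod n q => y.1 i) E; rewrite /= !ffunE => -[VE PE].
by apply: agree_rep => //; right.
Qed.

Lemma Fm_surj y : exists s, comm s /\ Fm s = y.
Proof.
have Hc : comm (perm (@py_inj y)) by move=> g x; rewrite !permE py_comm.
exists (perm (@py_inj y)); split => //.
rewrite /Fm [RHS]surjective_pairing; congr pair.
  apply/ffunP => i; rewrite ffunE [RHS]surjective_pairing.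
  have dn := dv_dvd i; have d1 := dv_gt1 i.
  have dn1 : (dv i == 1) = false by apply/negbTE; rewrite neq_ltn d1 orbT.
  congr pair.
    apply/ffunP => j; rewrite !ffunE permE.
    have jl := ltn_ord j.
    rewrite /py rep_per // idx_rep // (off_c (rep_c dn jl)) add0n.
    set r := rep _ (PhiN _ _ _).
    have rl : PhiN y (dv i) j < alpha (dv i) q by apply: PhiN_lt.
    have rp : per r = dv i by rewrite /r rep_per.
    have rc : c r = r by rewrite /r rep_c.
    rewrite -[RHS]natr_Zp; apply: modZ => //.
    have := off_sh (VN y (dv i) j) r; rewrite rp (off_c rc) addn0 => ->.
    by rewrite /VN pick_dv appE.
  apply/permP => j; apply: ord_inj; rewrite PhiE // permE.
  have jl := ltn_ord j.
  rewrite /py rep_per // idx_rep // idx_sh idx_rep ?PhiN_lt //.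
  by rewrite /PhiN dn1 pick_dv appE.
apply/permP => k; apply: ord_inj; rewrite cast_permE /= PhiE ?dvd1n // permE.
set j := cast_ord _ k.
have jl := ltn_ord j.
rewrite /py rep_per ?dvd1n // idx_rep ?dvd1n // idx_sh idx_rep ?PhiN_lt ?dvd1n //.
by rewrite /PhiN eqxx appE cast_ordKV.
Qed.

End Main.



End Comb.

Theorem lemma4 (n q : nat) (A : finType) :
  (2 <= n)%N -> #|A| = q -> (2 <= q)%N ->
  exists f : {perm config n A} -> WRprod n q,
    (forall s t : {perm config n A}, is_ICA s -> is_ICA t -> f (s * t)%g = rhs_mul (f s) (f t)) /\
    (forall s t : {perm config n A}, is_ICA s -> is_ICA t -> f s = f t -> s = t) /\
    (forall y : WRprod n q, exists s, is_ICA s /\ f s = y).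
Proof.
case: n => [|[|m]] // _ Aq q2; subst q.
have : 0 < #|A| by apply: leq_trans q2.
case/card_gt0P => a _.
pose x0 : config m.+2 A := [ffun _ => a].
exists (Fm x0); split; [|split].
- by move=> s t /ICA_comm Hs /ICA_comm Ht; exact: Fm_mul.
- by move=> s t /ICA_comm Hs /ICA_comm Ht; exact: Fm_inj.
- move=> y; have [s [Hs E]] := Fm_surj x0 y; exists s; split => //; exact/ICA_comm.
Qed.
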